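(* Let $K$ be a finite field, $G$ a finite group, $\ell\ge 1$ an integer, $n=\ell|G|$, and let $\mathcal{C}\subseteq K^n$ be a $K$-linear code. Then $\mathcal{C}$ is a quasi-$G$ code of index $\ell$ if and only if $G$ is isomorphic to a subgroup $H$ of $\mathrm{PAut}(\mathcal{C})$ which acts freely on the coordinate set $\{1,\ldots,n\}$ with exactly $\ell$ orbits (i.e. of index $\ell$).
   Context: For a finite group $G$ with a fixed ordering $g_1,\ldots,g_m$ of its elements ($m=|G|$), the group algebra $KG$ is identified with $K^m$ via the $K$-linear isomorphism $\varphi:\sum_i a_ig_i\mapsto(a_1,\ldots,a_m)$; then $KG^\ell=KG\oplus\cdots\oplus KG$ ($\ell$ copies) is identified with $K^{m\ell}$ via $\varphi^\ell$. A $K$-linear code $\mathcal{C}\subseteq K^{n}$, $n=\ell|G|$, is called a quasi-$G$ code of index $\ell$ if, for some bijection between the coordinate set $\{1,\ldots,n\}$ and $\{1,\ldots,\ell\}\times G$ (equivalently, for some such identification $K^n\cong KG^\ell$), $\mathcal{C}$ corresponds to a right $KG$-submodule of $KG^\ell$. The symmetric group $S_n$ acts on $K^n$ by $v^\sigma=(v_{\sigma^{-1}(1)},\ldots,v_{\sigma^{-1}(n)})$, and $\mathrm{PAut}(\mathcal{C})=\{\sigma\in S_n : \mathcal{C}^\sigma=\mathcal{C}\}$ is the permutation automorphism group of $\mathcal{C}$. An action is free if no non-identity element fixes any point; for a free action of a finite group $H$ on an $n$-element set, all orbits have size $|H|$ and the index is $n/|H|$. *)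

(* Defs.v *)
From HB Require Import structures.
From mathcomp Require Import all_boot all_order all_algebra all_fingroup.
Set Implicit Arguments. Unset Strict Implicit. Unset Printing Implicit Defensive.
Import GRing.Theory.
Local Open Scope ring_scope.

(* Elements of KG^l are represented by their coefficient functions
   (i, g) |-> coefficient of g in the i-th component. *)

(* Right multiplication of u in KG^l by alpha = \sum_h alpha_h h in KG:
   (u * alpha)_(i, g) = \sum_h u_(i, g h^-1) alpha_h. *)
Definition rmulKG (K : fieldType) (gT : finGroupType) (l : nat)
  (u : {ffun 'I_l * gT -> K}) (alpha : {ffun gT -> K}) : {ffun 'I_l * gT -> K} :=
  [ffun p => \sum_(h : gT) u (p.1, (p.2 * h^-1)%g) * alpha h].

Definition right_KG_submodule (K : fieldType) (gT : finGroupType) (l : nat)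
  (M : {ffun 'I_l * gT -> K} -> Prop) : Prop :=
  [/\ M 0,
      (forall u v, M u -> M v -> M (u + v)) &
      (forall u alpha, M u -> M (rmulKG u alpha))].

Definition toKGl (K : fieldType) (gT : finGroupType) (l n : nat)
  (f : 'I_l * gT -> 'I_n) (v : 'rV[K]_n) : {ffun 'I_l * gT -> K} :=
  [ffun p => v 0 (f p)].

Definition quasi_G_code (K : fieldType) (gT : finGroupType) (l n : nat)
  (C : {vspace 'rV[K]_n}) : Prop :=
  exists f : 'I_l * gT -> 'I_n, bijective f /\
    right_KG_submodule (fun u => exists2 v, v \in C & u = toKGl f v).

Definition permv (K : fieldType) (n : nat) (s : {perm 'I_n}) (v : 'rV[K]_n)
  : 'rV[K]_n := \row_j v 0 (s^-1 j)%g.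

Definition PAut (K : finFieldType) (n : nat) (C : {vspace 'rV[K]_n})
  : {set {perm 'I_n}} :=
  [set s : {perm 'I_n} |
     [set permv s v | v in [set v : 'rV[K]_n | v \in C]]
       == [set v : 'rV[K]_n | v \in C]].

Definition free_action (n : nat) (H : {set {perm 'I_n}}) : Prop :=
  forall s, s \in H -> forall x : 'I_n, s x = x -> s = 1%g.

Definition num_orbits (n : nat) (H : {set {perm 'I_n}}) : nat :=
  #|[set orbit 'P H x | x : 'I_n]|.

(* Main.v *)
Require Import Defs.
From HB Require Import structures.
From mathcomp Require Import all_boot all_order all_algebra all_fingroup.
Import GRing.Theory.

Section Fwd.
Variables (K : finFieldType) (gT : finGroupType) (l n : nat).
Variable f : 'I_l * gT -> 'I_n.
Variable fi : 'I_n -> 'I_l * gT.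
Hypothesis fK : cancel f fi.
Hypothesis fiK : cancel fi f.
Local Open Scope group_scope.

Definition Ff (h : gT) (x : 'I_n) : 'I_n := f ((fi x).1, (fi x).2 * h).

Lemma Ff_inj h : injective (Ff h).
Proof.
move=> x y /(can_inj fK) [] e1 /mulIg e2.
by apply: (can_inj fiK); move: e1 e2; case: (fi x); case: (fi y) => /= ? ? ? ? -> ->.
Qed.

Definition rho (h : gT) : {perm 'I_n} := perm (@Ff_inj h).

Lemma rhoE h i y : rho h (f (i, y)) = f (i, y * h).
Proof. by rewrite permE /Ff fK. Qed.

Lemma rhoM : {in [set: gT] &, {morph rho : x y / x * y}}.
Proof.
move=> g h _ _; apply/permP => x; rewrite permM -(fiK x).
by case: (fi x) => i y; rewrite !rhoE mulgA.
Qed.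

Definition rhom : {morphism [set: gT] >-> {perm 'I_n}} := Morphism rhoM.

Lemma rho_inj (i0 : 'I_l) : 'injm rhom.
Proof.
apply/injmP => g h _ _ /= /permP /(_ (f (i0, 1))).
by rewrite !rhoE !mul1g => /(can_inj fK) [].
Qed.

Lemma rhoV h : (rho h)^-1 = rho h^-1.
Proof. by rewrite -[rho _]/(rhom h) -morphV ?inE. Qed.

Lemma permvK (s : {perm 'I_n}) : cancel (@permv K n s) (permv s^-1).
Proof. by move=> v; apply/rowP => j; rewrite !mxE invgK permK. Qed.

Lemma fwd (hl : (0 < l)%N) (C : {vspace 'rV[K]_n})
  (hM : right_KG_submodule (fun u => exists2 v, v \in C & u = toKGl f v)) :
  exists H : {group {perm 'I_n}},
    [/\ H \subset PAut C, [set: gT] \isog H, free_action H & num_orbits H = l].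
Proof.
set H := (rhom @* [set: gT])%G.
have memH s : s \in H -> exists h, s = rho h.
  by rewrite /H /= morphimEdom => /imsetP [h _ ->]; exists h.
have rhoH h : rho h \in H by rewrite /H /= morphimEdom; apply: imset_f; rewrite inE.
exists H; split.
- apply/subsetP => s /memH [h ->]; rewrite inE eqEcard card_imset; last exact: can_inj (permvK _).
  rewrite leqnn andbT; apply/subsetP => w /imsetP [v]; rewrite inE => vC ->.
  case: hM => _ _ /(_ (toKGl f v) [ffun g => (g == h)%:R]%R).
  case; first by exists v.
  move=> w' w'C e; rewrite inE.
  suff -> : permv (rho h) v = w' by [].
  apply/rowP => j; rewrite mxE rhoV -(fiK j); case: (fi j) => i y.
  rewrite rhoE.
  have := congr1 (fun u : {ffun _ -> _} => u (i, y)) e; rewrite /= !ffunE /= => <-.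
  rewrite (bigD1 h) //=. rewrite !ffunE eqxx mulr1 big1 ?addr0 // => k kh.
  by rewrite !ffunE (negbTE kh) mulr0.
- apply/isogP; exists rhom; first exact: rho_inj (Ordinal hl).
  by [].
- move=> s /memH [h ->] x; rewrite -(fiK x); case: (fi x) => i y.
  rewrite rhoE => /(can_inj fK) [] /(congr1 (mulg y^-1)); rewrite mulKg mulVg => ->.
  by apply/permP => z; rewrite perm1 -(fiK z); case: (fi z) => ? ?; rewrite rhoE mulg1.
- have orbE i y : orbit 'P H (f (i, y)) = [set f (i, z) | z : gT].
    apply/setP => w; apply/orbitP/imsetP => [[s /memH [h ->] <-] | [z _ ->]].
      by rewrite /= ?apermE rhoE; exists (y * h).
    by exists (rho (y^-1 * z)) => //; rewrite /= ?apermE rhoE mulKVg.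
  rewrite /num_orbits.
  have -> : [set orbit 'P H x | x : 'I_n] = [set [set f (i, z) | z : gT] | i : 'I_l].
    apply/setP => S; apply/imsetP/imsetP => [[x _ ->] | [i _ ->]].
      by exists (fi x).1 => //; rewrite -(fiK x); case: (fi x) => i y; rewrite orbE fK.
    by exists (f (i, 1)) => //; rewrite orbE.
  rewrite card_imset ?card_ord // => i j e.
  have : f (i, 1) \in [set f (j, z) | z : gT] by rewrite -e; apply: imset_f.
  by case/imsetP => z _ /(can_inj fK) [].
Qed.

End Fwd.

Section Bwd.
Local Open Scope group_scope.

Lemma bwd (K : finFieldType) (gT : finGroupType) (l n : nat)
  (hn : n = (l * #|gT|)%N) (C : {vspace 'rV[K]_n}) (H : {group {perm 'I_n}})
  (sub : H \subset PAut C) (iso : [set: gT] \isog H) (fr : free_action H)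
  (orb : num_orbits H = l) : quasi_G_code gT l C.
Proof.
case/isogP: iso => phi injphi imphi.
have phiH g : phi g \in H by rewrite -imphi mem_morphim ?inE.
have phiM g h : phi (g * h) = phi g * phi h by rewrite morphM ?inE.
have phiV g : phi g^-1 = (phi g)^-1 by rewrite morphV ?inE.
have phiI : injective phi by move=> g h; move/injmP: injphi => /(_ g h); rewrite !inE; apply.
set O := [set orbit 'P H x | x : 'I_n].
have cO : #|O| = l by [].
pose S (i : 'I_l) : {set 'I_n} := enum_val (cast_ord (esym cO) i).
have SO i : S i \in O by apply: enum_valP.
have Sinj : injective S by move=> i j /enum_val_inj /cast_ord_inj.
have [r hr] : exists r : 'I_l -> 'I_n, forall i, S i = orbit 'P H (r i).
  apply: (@fin_all_exists _ (fun _ => 'I_n) (fun i x => S i = orbit 'P H x)) => i.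
  by case/imsetP: (SO i) => x _ ->; exists x.
pose f (p : 'I_l * gT) : 'I_n := phi p.2 (r p.1).
have fM i y h : f (i, y * h) = phi h (f (i, y)) by rewrite /f /= phiM permM.
have finj : injective f.
  move=> [i g] [j g'] /=; rewrite /f /= => e.
  have ij : i = j.
    apply: Sinj; rewrite !hr.
    have /orbit_eqP <- : phi g (r i) \in orbit 'P H (r i) by apply/orbitP; exists (phi g).
    by apply/orbit_eqP; rewrite e; apply/orbitP; exists (phi g').
  subst j; congr (_, _); apply: phiI.
  have : phi g * (phi g')^-1 = 1.
    have hm : phi g * (phi g')^-1 \in H by rewrite groupM ?groupV.
    apply: (fr _ hm (r i)).
    by rewrite permM e permK.
  by move/eqP; rewrite mulg_eq1 => /eqP ->; rewrite invgK.
have fbij : bijective f.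
  apply: (@inj_card_bij _ _ f finj); by rewrite card_prod !card_ord hn.
exists f; split => //; split.
- exists 0%R; first exact: mem0v.
  by apply/ffunP => p; rewrite !ffunE mxE.
- move=> u v [u' u'C ->] [v' v'C ->]; exists (u' + v')%R; first exact: memvD.
  by apply/ffunP => p; rewrite !ffunE mxE.
- move=> u alpha [v vC ->].
  have pC s w : s \in H -> w \in C -> permv s w \in C.
    move=> /(subsetP sub); rewrite inE => /eqP e wC.
    have : permv s w \in [set permv s v0 | v0 in [set v0 : 'rV[K]_n | v0 \in C]].
      by apply: imset_f; rewrite inE.
    by rewrite e inE.
  exists (\sum_(h : gT) alpha h *: permv (phi h) v)%R.
    by apply: memv_suml => h _; apply: memvZ; apply: pC.
  apply/ffunP => [[i x]]; rewrite !ffunE summxE /=.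
  apply: eq_bigr => h _; rewrite !mxE -phiV.
  by rewrite !ffunE -fM mulrC.
Qed.
End Bwd.

Theorem mainTheorem1 (K : finFieldType) (gT : finGroupType) (l n : nat)
  (hl : (1 <= l)%N) (hn : n = (l * #|gT|)%N) (C : {vspace 'rV[K]_n}) :
  quasi_G_code gT l C <->
  exists H : {group {perm 'I_n}},
    [/\ H \subset PAut C, ([set: gT] \isog H)%g,
        free_action H & num_orbits H = l].
Proof.
split.
- case=> f [[fi fK fiK] hM].
  exact: (@fwd K gT l n f fi fK fiK hl C hM).
- by case=> H [sub iso fr orb]; exact: (@bwd K gT l n hn C H sub iso fr orb).
Qed.
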